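(* Let $\alpha>0$ be such that $d_{g,\alpha}(p,q)=\|p^{-1}\cdot q\|_{g,\alpha}$ is a distance on $\mathbb H$ (in particular for any $0<\alpha\le 2$), where $\|(x,y,z)\|_{g,\alpha}=\big((x^2+y^2)^2+4\alpha^2z^2\big)^{1/4}$. Then BCP does not hold for $d_{g,\alpha}$ on $\mathbb H$. In particular BCP fails for the Cygan–Korányi distance $d_{g,2}$.
   Context: $\mathbb H=\mathbb R^3$ with group law $(x,y,z)\cdot(x',y',z')=(x+x',y+y',z+z'+\tfrac12(xy'-yx'))$. BCP holds for $d$ if there is $N\geq1$ such that for every bounded $A$ and every family $\mathcal B$ of closed balls with each point of $A$ the center of some ball of $\mathcal B$, some subfamily $\mathcal F\subset\mathcal B$ satisfies $\chi_A\le\sum_{B\in\mathcal F}\chi_B\le N$. *)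

(* Defs.v *)
From Stdlib Require Import Reals List.
Open Scope R_scope.

Definition Hpt : Type := (R * R * R)%type.

Definition Hmul (p q : Hpt) : Hpt :=
  match p, q with
  | (x, y, z), (x', y', z') =>
      (x + x', y + y', z + z' + / 2 * (x * y' - y * x'))
  end.

Definition Hinv (p : Hpt) : Hpt :=
  match p with (x, y, z) => (- x, - y, - z) end.

Definition gnorm (alpha : R) (p : Hpt) : R :=
  match p with
  | (x, y, z) => sqrt (sqrt ((x ^ 2 + y ^ 2) ^ 2 + 4 * alpha ^ 2 * z ^ 2))
  end.

Definition dg (alpha : R) (p q : Hpt) : R := gnorm alpha (Hmul (Hinv p) q).

Definition is_distance (d : Hpt -> Hpt -> R) : Prop :=
  (forall p q, 0 <= d p q) /\
  (forall p q, d p q = 0 <-> p = q) /\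
  (forall p q, d p q = d q p) /\
  (forall p q r, d p r <= d p q + d q r).

Definition is_ball_at (d : Hpt -> Hpt -> R) (S : Hpt -> Prop) (c : Hpt) (r : R) : Prop :=
  0 < r /\ forall z, S z <-> d c z <= r.

Definition is_closed_ball (d : Hpt -> Hpt -> R) (S : Hpt -> Prop) : Prop :=
  exists c r, is_ball_at d S c r.

Definition bounded (d : Hpt -> Hpt -> R) (A : Hpt -> Prop) : Prop :=
  exists c R0, forall a, A a -> d c a <= R0.

Definition same_set (S T : Hpt -> Prop) : Prop := forall z, S z <-> T z.

(* sum_{B in F} chi_B (y) <= N : at most N (distinct) balls of F contain y *)
Definition multiplicity_le (F : (Hpt -> Prop) -> Prop) (N : nat) : Prop :=
  forall (y : Hpt) (l : list (Hpt -> Prop)),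
    (forall S, In S l -> F S /\ S y) ->
    (forall i j, (i < length l)%nat -> (j < length l)%nat -> i <> j ->
       ~ same_set (nth i l (fun _ => False)) (nth j l (fun _ => False))) ->
    (length l <= N)%nat.

Definition BCP (d : Hpt -> Hpt -> R) : Prop :=
  exists N : nat, (1 <= N)%nat /\
    forall (A : Hpt -> Prop) (B : (Hpt -> Prop) -> Prop),
      bounded d A ->
      (forall S, B S -> is_closed_ball d S) ->
      (forall a, A a -> exists S r, B S /\ is_ball_at d S a r) ->
      exists F : (Hpt -> Prop) -> Prop,
        (forall S, F S -> B S) /\
        (forall a, A a -> exists S, F S /\ S a) /\
        multiplicity_le F N.

(* Main.v *)
Require Import Defs.
From Stdlib Require Import Reals List Lra Psatz Lia.
Open Scope R_scope.

Lemma core (al z M Nr I J s : R) :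
  0 < al -> al^2 * z = 4 * M^2 -> 0 < z ->
  0 <= I -> I + 1 <= J -> J <= Nr -> M = 1 + Nr^2 ->
  0 < s -> s * (4 * z) <= 1 -> s * M <= 1 ->
  let F := ((s-1)^2 + (I - J*s)^2)^2 + 4*al^2*(z*(1-s^2) + s*(J-I)/2)^2 in
  (1 + I^2)^2 + 4*al^2*z^2 < F /\ s^4 * ((1+J^2)^2 + 4*al^2*z^2) < F.
Proof.
  intros Hal Hz Hz0 HI HIJ HJ HM Hs Hs1 Hs2 F.
  set (W := 1 + I^2). set (C := 1 + I*J). set (V := 1 + J^2).
  set (E := (s-1)^2 + (I - J*s)^2).
  assert (HE : E = W - 2*s*C + s^2*V) by (unfold E, W, C, V; ring).
  assert (HNr : 0 <= Nr) by lra.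
  assert (HW : W <= M) by (unfold W; subst M; nra).
  assert (HC : C <= M) by (unfold C; subst M; nra).
  assert (HV : V <= M) by (unfold V; subst M; nra).
  assert (HC1 : 1 <= C) by (unfold C; nra).
  assert (HW1 : 1 <= W) by (unfold W; nra).
  assert (HM1 : 1 <= M) by (subst M; nra).
  assert (Hs1' : s <= 1) by nra.
  assert (HE0 : 0 <= E) by (unfold E; pose proof (pow2_ge_0 (s-1)); pose proof (pow2_ge_0 (I-J*s)); lra).
  assert (HEW : E - W >= -2*s*M).
  { rewrite HE. assert (0<=V) by (unfold V; nra). assert (0 <= s^2*V) by nra. nra. }
  assert (HEW2 : E + W <= 3*M).
  { rewrite HE. assert (0<=V) by (unfold V; nra). assert (s^2 <= 1) by nra.
    assert (s^2*V <= V) by nra. assert (0 <= s*C) by nra. lra. }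
  assert (HE2 : E^2 - W^2 >= -6*s*M^2).
  { destruct (Rle_dec W E).
    - nra.
    - replace (E^2 - W^2) with ((E-W)*(E+W)) by ring. nra. }
  set (T := z*(1-s^2) + s*(J-I)/2).
  assert (HT1 : T - z >= s/4) by (unfold T; nra).
  assert (HT2 : T^2 - z^2 >= s*z/2).
  { replace (T^2 - z^2) with ((T-z)*(T+z)) by ring. nra. }
  assert (HT3 : 4*al^2*(T^2 - z^2) >= 8*s*M^2) by nra.
  assert (HF : F = E^2 + 4*al^2*T^2) by (unfold F, E, T; ring).
  assert (Hfirst : W^2 + 4*al^2*z^2 < F).
  { rewrite HF. assert (0 < s*M^2) by (apply Rmult_lt_0_compat; nra).
    assert (4*al^2*T^2 = 4*al^2*(T^2-z^2) + 4*al^2*z^2) by ring. lra. }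
  split; [exact Hfirst|].
  assert (Hs2' : s^2 <= 1) by nra. assert (Hs4 : s^4 <= 1) by (replace (s^4) with (s^2*s^2) by ring; assert (0<=s^2) by nra; nra).
  assert (HsV : s^4 * V^2 <= 1).
  { assert (0<=V) by (unfold V; nra). assert (s*V <= 1) by nra. assert (0 <= s*V) by nra.
    replace (s^4*V^2) with (s^2*(s*V)^2) by ring. assert ((s*V)^2 <= 1) by nra. assert (0<=s^2) by nra. nra. }
  assert (0 <= 4*al^2*z^2) by nra.
  assert (s^4 * (4*al^2*z^2) <= 4*al^2*z^2) by nra.
  assert (1 <= W^2) by nra.
  fold V. nra.
Qed.

Definition MM (Nn : nat) : R := 1 + INR Nn ^ 2.
Definition zz (al : R) (Nn : nat) : R := 4 * MM Nn ^ 2 / al ^ 2.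
Definition Lam (al : R) (Nn : nat) : R := / (4 * zz al Nn + MM Nn + 1).
Definition PP (al : R) (Nn k : nat) : Hpt :=
  (Lam al Nn ^ k, - INR k * Lam al Nn ^ k, - (Lam al Nn ^ k) ^ 2 * zz al Nn).
Definition O3 : Hpt := (0, 0, 0).

Lemma dg_explicit al x y z x' y' z' :
  dg al (x, y, z) (x', y', z') =
  sqrt (sqrt (((- x + x') ^ 2 + (- y + y') ^ 2) ^ 2 + 4 * al ^ 2 *
     (- z + z' + / 2 * (- x * y' - - y * x')) ^ 2)).
Proof. reflexivity. Qed.

Lemma sqrt4_lt u v : 0 <= u -> u < v -> sqrt (sqrt u) < sqrt (sqrt v).
Proof.
  intros Hu Huv. apply sqrt_lt_1_alt. split.
  - apply sqrt_pos.
  - apply sqrt_lt_1_alt. lra.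
Qed.

Lemma pow_le_L (L : R) k : 0 < L -> L <= 1 -> (1 <= k)%nat -> L ^ k <= L.
Proof.
  intros H0 H1 Hk. destruct k as [|k]; [lia|].
  simpl. assert (L ^ k <= 1).
  { clear Hk. induction k; simpl; [lra|]. nra. }
  assert (0 <= L ^ k) by (apply pow_le; lra). nra.
Qed.

Lemma key al Nn i j : 0 < al -> (i < j)%nat -> (j <= Nn)%nat ->
  dg al (PP al Nn i) O3 < dg al (PP al Nn i) (PP al Nn j) /\
  dg al (PP al Nn j) O3 < dg al (PP al Nn i) (PP al Nn j).
Proof.
  intros Hal Hij HjN.
  set (M := MM Nn). set (z := zz al Nn). set (L := Lam al Nn).
  assert (HM1 : 1 <= M) by (unfold M, MM; pose proof (pow2_ge_0 (INR Nn)); lra).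
  assert (Hz0 : 0 < z).
  { unfold z, zz. fold M. apply Rdiv_lt_0_compat; [nra | apply pow_lt; lra]. }
  assert (Hzal : al ^ 2 * z = 4 * M ^ 2).
  { unfold z, zz. fold M. field. lra. }
  assert (HD : 0 < 4 * z + M + 1) by lra.
  assert (HL0 : 0 < L) by (unfold L, Lam; fold z M; apply Rinv_0_lt_compat; lra).
  assert (HLD : L * (4 * z + M + 1) = 1) by (unfold L, Lam; fold z M; field; lra).
  assert (HL1 : L <= 1) by nra.
  set (a := L ^ i). set (s := L ^ (j - i)).
  assert (Ha : 0 < a) by (apply pow_lt; lra).
  assert (Hs0 : 0 < s) by (apply pow_lt; lra).
  assert (HsL : s <= L) by (apply pow_le_L; [lra|lra|lia]).
  assert (Hj : L ^ j = a * s).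
  { unfold a, s. rewrite <- pow_add. f_equal. lia. }
  assert (HI0 : 0 <= INR i) by apply pos_INR.
  assert (HIJ : INR i + 1 <= INR j).
  { rewrite <- S_INR. apply le_INR. lia. }
  assert (HJN : INR j <= INR Nn) by (apply le_INR; lia).
  destruct (core al z M (INR Nn) (INR i) (INR j) s Hal Hzal Hz0 HI0 HIJ HJN
              eq_refl Hs0 ltac:(nra) ltac:(nra)) as [H1 H2].
  unfold PP, O3. fold L z. rewrite Hj. fold a. rewrite !dg_explicit.
  set (F := ((s - 1) ^ 2 + (INR i - INR j * s) ^ 2) ^ 2 +
        4 * al ^ 2 * (z * (1 - s ^ 2) + s * (INR j - INR i) / 2) ^ 2) in *.
  assert (Ha4 : 0 < a ^ 4) by (apply pow_lt; lra).
  split; apply sqrt4_lt.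
  - apply Rplus_le_le_0_compat; [apply pow2_ge_0 | ].
    apply Rmult_le_pos; [ nra | apply pow2_ge_0].
  - match goal with |- ?u < ?v =>
      replace u with (a ^ 4 * ((1 + INR i ^ 2) ^ 2 + 4 * al ^ 2 * z ^ 2)) by ring;
      replace v with (a ^ 4 * F) by (unfold F; field) end.
    apply Rmult_lt_compat_l; assumption.
  - apply Rplus_le_le_0_compat; [apply pow2_ge_0 | ].
    apply Rmult_le_pos; [ nra | apply pow2_ge_0].
  - match goal with |- ?u < ?v =>
      replace u with (a ^ 4 * (s ^ 4 * ((1 + INR j ^ 2) ^ 2 + 4 * al ^ 2 * z ^ 2))) by ring;
      replace v with (a ^ 4 * F) by (unfold F; field) end.
    apply Rmult_lt_compat_l; assumption.
Qed.

Lemma Lam_pos al Nn : 0 < al -> 0 < Lam al Nn.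
Proof.
  intros Hal. unfold Lam. apply Rinv_0_lt_compat.
  assert (1 <= MM Nn) by (unfold MM; pose proof (pow2_ge_0 (INR Nn)); lra).
  assert (0 < zz al Nn).
  { unfold zz. apply Rdiv_lt_0_compat; [nra | apply pow_lt; lra]. }
  lra.
Qed.

Theorem mainTheorem6 (alpha : R) (Halpha : 0 < alpha)
  (Hdist : is_distance (dg alpha)) : ~ BCP (dg alpha).
Proof.
  destruct Hdist as [Hnn [Hzero [Hsym _]]].
  intros [N [HN Hbcp]].
  set (P := PP alpha N).
  set (r := fun k => dg alpha (P k) O3).
  assert (Hpos : forall k, 0 < r k).
  { intro k. unfold r. destruct (Rle_lt_or_eq_dec 0 _ (Hnn (P k) O3)) as [h|h]; [exact h|].
    symmetry in h. apply Hzero in h. unfold P, PP, O3 in h. injection h as h1 _ _.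
    pose proof (pow_lt _ k (Lam_pos alpha N Halpha)). lra. }
  assert (Hsep : forall m k, (m <= N)%nat -> (k <= N)%nat -> m <> k ->
            r m < dg alpha (P m) (P k)).
  { intros m k Hm Hk Hmk. unfold r, P.
    destruct (Nat.lt_gt_cases m k) as [[h|h] _]; [exact Hmk| |].
    - exact (proj1 (key alpha N m k Halpha h Hk)).
    - rewrite (Hsym (PP alpha N m) (PP alpha N k)). exact (proj2 (key alpha N k m Halpha h Hm)). }
  set (Ball := fun k => fun q => dg alpha (P k) q <= r k).
  set (A := fun p => exists k, (k <= N)%nat /\ p = P k).
  set (B := fun S => exists k, (k <= N)%nat /\ S = Ball k).
  assert (Hbd : forall n, exists R0, forall k, (k <= n)%nat -> dg alpha O3 (P k) <= R0).
  { induction n as [|n [R0 HR0]].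
    - exists (dg alpha O3 (P 0%nat)). intros k Hk. replace k with 0%nat by lia. lra.
    - exists (Rmax R0 (dg alpha O3 (P (S n)))). intros k Hk.
      destruct (Nat.eq_dec k (S n)) as [->|h].
      + apply Rmax_r.
      + eapply Rle_trans; [apply HR0; lia | apply Rmax_l]. }
  destruct (Hbcp A B) as [F [HFB [Hcov Hmult]]].
  - destruct (Hbd N) as [R0 HR0]. exists O3, R0. intros a [k [Hk ->]]. auto.
  - intros S [k [_ ->]]. exists (P k), (r k). split; [apply Hpos|]. intro q. unfold Ball. tauto.
  - intros a [k [Hk ->]]. exists (Ball k), (r k). split.
    + exists k. split; [exact Hk|reflexivity].
    + split; [apply Hpos|]. intro q. unfold Ball. tauto.
  - assert (HinF : forall k, (k <= N)%nat -> F (Ball k)).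
    { intros k Hk. destruct (Hcov (P k)) as [S [HS HSk]].
      + exists k. split; [exact Hk|reflexivity].
      + destruct (HFB S HS) as [m [Hm ->]].
        destruct (Nat.eq_dec m k) as [->|h]; [exact HS|].
        exfalso. unfold Ball in HSk. pose proof (Hsep m k Hm Hk h). lra. }
    set (l := map Ball (seq 0 (S N))).
    assert (Hlen : length l = S N) by (unfold l; rewrite length_map, length_seq; reflexivity).
    assert (Hnth : forall i, (i < S N)%nat -> nth i l (fun _ => False) = Ball i).
    { intros i Hi. unfold l. rewrite (nth_indep _ _ (Ball 0%nat)) by (rewrite length_map, length_seq; lia).
      rewrite map_nth. rewrite seq_nth by lia. reflexivity. }
    assert (Hle := Hmult O3 l).
    assert (length l <= N)%nat.
    { apply Hle.
      - intros S HS. unfold l in HS. apply in_map_iff in HS. destruct HS as [k [<- Hk]].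
        apply in_seq in Hk. split; [apply HinF; lia|]. unfold Ball, r. lra.
      - intros i j Hi Hj Hij Hsame. rewrite Hlen in Hi, Hj.
        rewrite (Hnth i Hi), (Hnth j Hj) in Hsame.
        assert (Ball i (P i)).
        { unfold Ball. rewrite (proj2 (Hzero (P i) (P i)) eq_refl). left; apply Hpos. }
        apply Hsame in H. unfold Ball in H.
        pose proof (Hsep j i ltac:(lia) ltac:(lia) ltac:(lia)). lra. }
    lia.
Qed.
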